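(* Let $X=(x_1,\dots,x_n)\in(\mathbb{Z}_{12})^n$ have $n$ pairwise distinct entries. Let $G$ be a subgroup of the group $\mathrm{Aff}^*(\mathbb{Z}_{12})$ of invertible affine maps $\mathbb{Z}_{12}\to\mathbb{Z}_{12}$, acting componentwise on $(\mathbb{Z}_{12})^n$, and assume $f\{x_1,\dots,x_n\}\neq\{x_1,\dots,x_n\}$ for every non-identity $f\in G$. Let $\Sigma_n$ act on $(\mathbb{Z}_{12})^n$ by $\sigma(y_1,\dots,y_n)=(y_{\sigma^{-1}(1)},\dots,y_{\sigma^{-1}(n)})$. Let $\Sigma_nG$ be the subgroup of $\mathrm{Sym}((\mathbb{Z}_{12})^n)$ generated by $\Sigma_n$ and $G$ (an internal direct product, each element written uniquely as $\sigma g$ with $\sigma\in\Sigma_n$, $g\in G$), and let $\lambda(\Sigma_nG)$ be the subgroup of $\mathrm{Sym}(\Sigma_nGX)$ given by the action of $\Sigma_nG$ on the orbit $\Sigma_nGX$. Let $\rho(\Sigma_nG)\subseteq\mathrm{Sym}(\Sigma_nGX)$ consist of the maps $\rho(\nu h)$, $\nu\in\Sigma_n$, $h\in G$, defined by $$\rho(\nu h)\,\sigma g X:=\sigma g(\nu h)^{-1}X\quad(\sigma\in\Sigma_n,\ g\in G),$$ and let $\rho(\Sigma_n)=\{\rho(\nu):\nu\in\Sigma_n\}$, $\rho(G)=\{\rho(h):h\in G\}$, with $\lambda(\Sigma_n)$, $\lambda(G)$ defined analogously from the left actions. Then: (i) the restriction of $\rho(\Sigma_n)$ to $\Sigma_nX$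 is the dual group of $\lambda(\Sigma_n)$ in $\mathrm{Sym}(\Sigma_nX)$, and the restriction of $\rho(G)$ to $GX$ is the dual group of $\lambda(G)$ in $\mathrm{Sym}(GX)$; (ii) the subgroups $\rho(\Sigma_n)$ and $\rho(G)$ of $\mathrm{Sym}(\Sigma_nGX)$ commute, i.e. $\rho(\nu)\rho(h)=\rho(h)\rho(\nu)$ for all $\nu\in\Sigma_n$, $h\in G$; (iii) $\rho(\Sigma_nG)$ is the internal direct product of $\rho(\Sigma_n)$ and $\rho(G)$; (iv) if $Y\in\sigma GX$ (for some $\sigma\in\Sigma_n$) and $h\in G$, then $\rho(h)Y=\sigma\rho(h)\sigma^{-1}Y$.
   Context: $\mathrm{Sym}(S)$ denotes the group of all bijections of a set $S$. An invertible affine map of $\mathbb{Z}_{12}$ is $k\mapsto ak+b$ with $a$ a unit of $\mathbb{Z}_{12}$; it acts on $n$-tuples componentwise, and these maps commute with the permutation action of $\Sigma_n$. The dual group of a subgroup $A\le\mathrm{Sym}(S)$ acting simply transitively is the subgroup $B$ such that $A,B$ both act simply transitively and each is the centralizer of the other in $\mathrm{Sym}(S)$. A group $H$ is the internal direct product of subgroups $K,L$ if $K$ and $L$ commute, $K\cap L=\{e\}$, and every element of $H$ is $k\ell$ with $k\in K$, $\ell\in L$. *)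

(* Defs.v *)
From mathcomp Require Import all_boot all_fingroup all_algebra.
Set Implicit Arguments.
Unset Strict Implicit.
Unset Printing Implicit Defensive.
Import GRing.Theory.
Local Open Scope group_scope.

Definition tup (n : nat) : finType := {ffun 'I_n -> 'Z_12}.

Definition Aff : {set {perm 'Z_12}} :=
  [set f : {perm 'Z_12} | [exists a : 'Z_12, exists b : 'Z_12,
     (a \is a GRing.unit) && [forall k : 'Z_12, f k == (a * k + b)%R]]].

Definition sigma_fun n (s : 'S_n) (y : tup n) : tup n := [ffun i => y (s^-1 i)].
Lemma sigma_fun_inj n (s : 'S_n) : injective (sigma_fun s).
Proof.
apply: (can_inj (g := sigma_fun s^-1)) => y; apply/ffunP => i.
by rewrite !ffunE invgK permK.
Qed.
Definition sigma_act n (s : 'S_n) : {perm tup n} := perm (@sigma_fun_inj n s).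

Definition aff_fun n (f : {perm 'Z_12}) (y : tup n) : tup n := [ffun i => f (y i)].
Lemma aff_fun_inj n (f : {perm 'Z_12}) : injective (@aff_fun n f).
Proof.
apply: (can_inj (g := @aff_fun n f^-1)) => y; apply/ffunP => i.
by rewrite !ffunE permK.
Qed.
Definition aff_act n (f : {perm 'Z_12}) : {perm tup n} := perm (@aff_fun_inj n f).

Definition SigmaS n : {set {perm tup n}} := [set sigma_act s | s : 'S_n].
Definition Gt n (G : {set {perm 'Z_12}}) : {set {perm tup n}} := [set aff_act n f | f in G].
Definition SigmaG n (G : {set {perm 'Z_12}}) : {set {perm tup n}} :=
  <<SigmaS n :|: Gt n G>>.

Definition orbitX (T : finType) (A : {set {perm T}}) (X : T) : {set T} :=
  [set (p : {perm T}) X | p in A].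

(* rho(p) (q X) := q (p^-1 X) for q in Sigma_n G (function application order:
   q (p^-1 X) is  sigma g (nu h)^-1 X  when q = sigma g, p = nu h);
   identity outside the orbit Sigma_n G X. *)
Definition rho_fun n (G : {set {perm 'Z_12}}) (X : tup n) (p : {perm tup n})
  (y : tup n) : tup n :=
  if [pick q in SigmaG n G | q X == y] is Some q then q (p^-1 X) else y.

(* the corresponding permutation (the theorem also asserts rho_fun is injective,
   so the fallback value 1 is never used for p in Sigma_n G) *)
Definition rho n (G : {set {perm 'Z_12}}) (X : tup n) (p : {perm tup n})
  : {perm tup n} :=
  match injectiveP (rho_fun G X p) with
  | ReflectT inj => perm inj
  | ReflectF _ => 1
  end.

Definition simply_transitive (T : finType) (S : {set T}) (A : {set {perm T}}) :=
  forall x y, x \in S -> y \in S -> exists! a, a \in A /\ a x = y.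

Definition dual_group (T : finType) (S : {set T}) (A B : {set {perm T}}) :=
  [/\ A \subset Sym S, B \subset Sym S,
      simply_transitive S A, simply_transitive S B &
      'C_(Sym S)(A) = B /\ 'C_(Sym S)(B) = A].

Definition int_dprod (gT : finGroupType) (H K L : {set gT}) :=
  [/\ forall k l, k \in K -> l \in L -> commute k l,
      K :&: L = [set 1] &
      forall x, x \in H <-> exists k l, [/\ k \in K, l \in L & x = k * l]].

(* Main.v *)
Require Import Defs.
From mathcomp Require Import all_boot all_fingroup all_algebra.
Local Open Scope group_scope.
Set Implicit Arguments.
Unset Strict Implicit.

Section Abstract.
Variables (T : finType) (K : {group {perm T}}) (x0 : T) (rh : {perm T} -> {perm T}).
Hypothesis free : forall k, k \in K -> k x0 = x0 -> k = 1.
Hypothesis rhE : forall k q, k \in K -> q \in K -> rh k (q x0) = q (k^-1 x0).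
Local Notation S := (orbitX K x0).

Lemma ab_free_eq p p' : p \in K -> p' \in K -> p x0 = p' x0 -> p = p'.
Proof.
move=> pK p'K e; apply/eqP; rewrite eq_mulgV1; apply/eqP; apply: free.
  by rewrite groupM ?groupV.
by rewrite permM e permK.
Qed.

Lemma ab_memS y : reflect (exists2 q, q \in K & y = q x0) (y \in S).
Proof. exact: imsetP. Qed.

Lemma ab_x0S : x0 \in S.
Proof. by apply/ab_memS; exists 1; rewrite ?group1 ?perm1. Qed.

Lemma ab_qS q : q \in K -> q x0 \in S.
Proof. by move=> qK; apply/ab_memS; exists q. Qed.

Lemma ab_KN k : k \in K -> k \in 'N(S | 'P).
Proof.
move=> kK; apply/astabsP => x /=; rewrite /aperm.
apply/ab_memS/ab_memS => -[q qK e].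
  exists (q * k^-1); first by rewrite groupM ?groupV.
  by rewrite permM -e permK.
exists (q * k); first by rewrite groupM.
by rewrite permM e.
Qed.

Lemma ab_rhN k : k \in K -> rh k \in 'N(S | 'P).
Proof.
move=> kK; apply/astabsP => x /=; rewrite /aperm.
apply/idP/idP.
  move=> /ab_memS [q qK e].
  have e2 : rh k ((k * q) x0) = rh k x by rewrite rhE ?groupM // permM permKV.
  by rewrite -(perm_inj e2) ab_qS ?groupM.
by move=> /ab_memS [q qK ->]; rewrite rhE // -permM ab_qS // groupM ?groupV.
Qed.

Lemma ab_LE k y : k \in K -> y \in S -> restr_perm S k y = k y.
Proof. by move=> kK yS; rewrite restr_permE // ab_KN. Qed.

Lemma ab_RE k q : k \in K -> q \in K -> restr_perm S (rh k) (q x0) = q (k^-1 x0).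
Proof. by move=> kK qK; rewrite restr_permE ?ab_rhN ?ab_qS ?rhE. Qed.

Lemma ab_out p y : y \notin S -> restr_perm S p y = y.
Proof. by move=> yS; rewrite (out_perm (restr_perm_on _ _)). Qed.

Lemma ab_dual : dual_group S (restr_perm S @: K) (restr_perm S @: (rh @: K)).
Proof.
have memA a : reflect (exists2 k, k \in K & a = restr_perm S k) (a \in restr_perm S @: K).
  exact: imsetP.
have memB b : reflect (exists2 k, k \in K & b = restr_perm S (rh k))
    (b \in restr_perm S @: (rh @: K)).
  apply: (iffP imsetP) => [[r /imsetP [k kK ->] ->]|[k kK ->]]; first by exists k.
  by exists (rh k); rewrite ?imset_f.
have comLR k k' : k \in K -> k' \in K ->
    commute (restr_perm S k) (restr_perm S (rh k')).
  move=> kK k'K; apply/permP => y; rewrite !permM.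
  have [/ab_memS [q qK ->]|yS] := boolP (y \in S); last by rewrite !ab_out.
  rewrite (ab_LE kK (ab_qS qK)).
  have -> : k (q x0) = (q * k) x0 by rewrite permM.
  rewrite !ab_RE ?groupM // ab_LE ?permM //.
  by rewrite -permM ab_qS // groupM ?groupV.
have cx0 c : perm_on S c -> exists2 q0, q0 \in K & c x0 = q0 x0.
  by move=> cS; apply/ab_memS; rewrite (perm_closed _ cS) ab_x0S.
have SymA : restr_perm S @: K \subset Sym S.
  by apply/subsetP => a /memA [k _ ->]; rewrite inE restr_perm_on.
have SymB : restr_perm S @: (rh @: K) \subset Sym S.
  by apply/subsetP => a /memB [k _ ->]; rewrite inE restr_perm_on.
split=> //.
- move=> x y /ab_memS [q qK ->] /ab_memS [q' q'K ->].
  exists (restr_perm S (q^-1 * q')); split.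
    split; first by apply/memA; exists (q^-1 * q'); rewrite ?groupM ?groupV.
    by rewrite ab_LE ?ab_qS ?groupM ?groupV // permM permK.
  move=> a [/memA [k kK ->]]; rewrite ab_LE ?ab_qS // -permM => /ab_free_eq e.
  have -> : k = q^-1 * q' by rewrite -e ?groupM // mulKg.
  by [].
- move=> x y /ab_memS [q qK ->] /ab_memS [q' q'K ->].
  exists (restr_perm S (rh (q * q'^-1))); split.
    split; first by apply/memB; exists (q * q'^-1); rewrite ?groupM ?groupV.
    by rewrite ab_RE ?groupM ?groupV // invMg invgK permM permKV.
  move=> a [/memB [k kK ->]]; rewrite ab_RE // -permM => /ab_free_eq e.
  have -> : k = q * q'^-1 by rewrite -e ?groupM ?groupV // invMg invgK mulKVg.
  by [].
- split; apply/setP => c; rewrite !inE.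
  + apply/andP/memB => [[cS /centP cC]|[k kK ->]]; last first.
      split; first by rewrite restr_perm_on.
      by apply/centP => a /memA [k' k'K ->]; apply/esym/comLR.
    have [q0 q0K e0] := cx0 c cS.
    exists q0^-1; first by rewrite groupV.
    apply/permP => y; have [/ab_memS [q qK ->]|yS] := boolP (y \in S); last first.
      by rewrite ab_out // (out_perm cS).
    rewrite ab_RE ?groupV // invgK.
    have := congr1 (fun p : {perm T} => p x0) (cC (restr_perm S q) (imset_f _ qK)).
    by rewrite /= !permM e0 (ab_LE qK ab_x0S) (ab_LE qK (ab_qS q0K)) => <-.
  + apply/andP/memA => [[cS /centP cC]|[k kK ->]]; last first.
      split; first by rewrite restr_perm_on.
      by apply/centP => b /memB [k' k'K ->]; apply: comLR.
    have [q0 q0K e0] := cx0 c cS.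
    exists q0 => //.
    apply/permP => y; have [/ab_memS [q qK ->]|yS] := boolP (y \in S); last first.
      by rewrite ab_out // (out_perm cS).
    rewrite ab_LE ?ab_qS //.
    have hb : restr_perm S (rh q^-1) \in restr_perm S @: (rh @: K).
      by apply/memB; exists q^-1; rewrite ?groupV.
    have := congr1 (fun p : {perm T} => p x0) (cC _ hb).
    rewrite /= !permM.
    have h1 : restr_perm S (rh q^-1) x0 = q x0.
      by have := @ab_RE q^-1 1; rewrite !perm1 invgK; apply; rewrite ?groupV ?group1.
    rewrite h1 e0.
    by rewrite ab_RE ?groupV // invgK => <-.
Qed.

End Abstract.

Lemma sigma_actE n (s : 'S_n) (y : tup n) i : sigma_act s y i = y (s^-1 i).
Proof. by rewrite /sigma_act permE /sigma_fun ffunE. Qed.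

Lemma aff_actE n f (y : tup n) i : aff_act n f y i = f (y i).
Proof. by rewrite /aff_act permE /aff_fun ffunE. Qed.

Lemma sigma_actM n (s t : 'S_n) : sigma_act (s * t) = sigma_act s * sigma_act t.
Proof.
apply/permP => y; apply/ffunP => i.
by rewrite permM !sigma_actE invMg permM.
Qed.

Lemma sigma_act1 n : sigma_act (1 : 'S_n) = 1.
Proof. by apply/permP => y; apply/ffunP => i; rewrite sigma_actE invg1 !perm1. Qed.

Lemma aff_actM n f g : aff_act n (f * g) = aff_act n f * aff_act n g.
Proof. by apply/permP => y; apply/ffunP => i; rewrite permM !aff_actE permM. Qed.

Lemma aff_act1 n : aff_act n 1 = 1.
Proof. by apply/permP => y; apply/ffunP => i; rewrite aff_actE !perm1. Qed.

Lemma comm_sa n (s : 'S_n) f : commute (sigma_act s) (aff_act n f).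
Proof.
by apply/permP => y; apply/ffunP => i; rewrite !permM !(sigma_actE, aff_actE).
Qed.

Lemma SigmaS_gs n : group_set (SigmaS n).
Proof.
apply/group_setP; split.
  by apply/imsetP; exists 1; rewrite ?sigma_act1.
move=> x y /imsetP [s _ ->] /imsetP [t _ ->].
by apply/imsetP; exists (s * t); rewrite ?sigma_actM.
Qed.

Lemma Gt_gs n (G : {group {perm 'Z_12}}) : group_set (Gt n G).
Proof.
apply/group_setP; split.
  by apply/imsetP; exists 1; rewrite ?group1 ?aff_act1.
move=> x y /imsetP [s sG ->] /imsetP [t tG ->].
by apply/imsetP; exists (s * t); rewrite ?groupM ?aff_actM.
Qed.

Canonical SigmaSg n := Group (SigmaS_gs n).
Canonical Gtg n G := Group (Gt_gs n G).

Lemma SigmaG_eq n (G : {group {perm 'Z_12}}) : SigmaG n G = SigmaS n * Gt n G.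
Proof.
have -> : SigmaG n G = SigmaSg n <*> Gtg n G by [].
rewrite comm_joingE //; apply: centC; apply/subsetP => x /imsetP [s _ ->].
by apply/centP => y /imsetP [f _ ->]; apply: comm_sa.
Qed.

Lemma memSG n (G : {group {perm 'Z_12}}) q : reflect (exists s, exists2 f, f \in G & q = sigma_act s * aff_act n f)
  (q \in SigmaG n G).
Proof.
rewrite SigmaG_eq; apply: (iffP mulsgP) => [[a b /imsetP [s _ ->] /imsetP [f fG ->] ->]|[s [f fG ->]]].
  by exists s, f.
by exists (sigma_act s) (aff_act n f); rewrite ?imset_f.
Qed.

Section Concrete.
Variables (n : nat) (X : tup n) (G : {group {perm 'Z_12}}).
Hypothesis Xinj : injective X.
Hypothesis HG : forall f, f \in G -> f != 1 ->
     [set f x | x in [set X i | i : 'I_n]] != [set X i | i : 'I_n].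

Lemma fix1 f : f \in G -> (forall i, exists j, f (X i) = X j) -> f = 1.
Proof.
move=> fG h; apply/eqP; apply: contraT => nf; have := HG fG nf.
rewrite eqEcard (card_imset _ (@perm_inj _ f)).
rewrite leqnn andbT; case/negP; apply/subsetP => y /imsetP [x /imsetP [i _ ->] ->].
by have [j ->] := h i; rewrite imset_f.
Qed.

Lemma free_core s f : f \in G -> aff_act n f (sigma_act s X) = X -> f = 1 /\ s = 1.
Proof.
move=> fG e.
have ei i : f (X (s^-1 i)) = X i.
  by have := congr1 (fun y : tup n => y i) e; rewrite /= aff_actE sigma_actE.
have f1 : f = 1.
  by apply: fix1 => // j; exists (s j); have := ei (s j); rewrite permK.
split=> //; move: e; rewrite f1 aff_act1 perm1 => e.
have h : s^-1 = 1.
  apply/permP => i; rewrite perm1; apply: Xinj.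
  by have := congr1 (fun y : tup n => y i) e; rewrite /= sigma_actE.
by rewrite -(invgK s) h invg1.
Qed.

Lemma free_SG q : q \in SigmaG n G -> q X = X -> q = 1.
Proof.
move=> /memSG [s [f fG ->]]; rewrite permM => e.
by have [-> ->] := free_core fG e; rewrite sigma_act1 aff_act1 mulg1.
Qed.

Lemma free_eq p p' : p \in SigmaG n G -> p' \in SigmaG n G -> p X = p' X -> p = p'.
Proof.
move=> pK p'K e; apply/eqP; rewrite eq_mulgV1; apply/eqP; apply: free_SG.
  by rewrite groupM ?groupV.
by rewrite permM e permK.
Qed.

Lemma rho_funE p q : q \in SigmaG n G -> rho_fun G X p (q X) = q (p^-1 X).
Proof.
move=> qK; rewrite /rho_fun; case: pickP => [q' /andP [q'K /eqP e]|none].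
  by rewrite (free_eq q'K qK e).
by have := none q; rewrite qK eqxx.
Qed.

Lemma rho_fun_out p y : y \notin orbitX (SigmaG n G) X -> rho_fun G X p y = y.
Proof.
move=> yO; rewrite /rho_fun; case: pickP => [q' /andP [q'K /eqP e]|//].
by case/negP: yO; apply/imsetP; exists q'.
Qed.

Lemma memO y : reflect (exists2 q, q \in SigmaG n G & y = q X) (y \in orbitX (SigmaG n G) X).
Proof. exact: imsetP. Qed.

Lemma rho_fun_inj p : p \in SigmaG n G -> injective (rho_fun G X p).
Proof.
move=> pK x y.
have [/memO [q qK ->]|xO] := boolP (x \in orbitX (SigmaG n G) X);
have [/memO [q' q'K ->]|yO] := boolP (y \in orbitX (SigmaG n G) X).
- rewrite !rho_funE // -!permM => /free_eq e.
  have e2 : p^-1 * q = p^-1 * q' by apply: e; rewrite groupM ?groupV.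
  by rewrite -(mulKVg p q) e2 mulKVg.
- rewrite rho_funE // rho_fun_out // => e; case/negP: yO; rewrite -e.
  by apply/memO; exists (p^-1 * q); rewrite ?permM // groupM ?groupV.
- rewrite rho_funE // rho_fun_out // => e; case/negP: xO; rewrite e.
  by apply/memO; exists (p^-1 * q'); rewrite ?permM // groupM ?groupV.
- by rewrite !rho_fun_out.
Qed.

Lemma rhoE p y : p \in SigmaG n G -> rho G X p y = rho_fun G X p y.
Proof.
move=> pK; rewrite /rho; case: injectiveP => [inj|ninj]; first by rewrite permE.
by case: ninj; apply: rho_fun_inj.
Qed.

Lemma rhoE2 p q : p \in SigmaG n G -> q \in SigmaG n G -> rho G X p (q X) = q (p^-1 X).
Proof. by move=> pK qK; rewrite rhoE // rho_funE. Qed.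

Lemma rho_out p y : p \in SigmaG n G -> y \notin orbitX (SigmaG n G) X -> rho G X p y = y.
Proof. by move=> pK yO; rewrite rhoE // rho_fun_out. Qed.

Lemma rho_mul p p' : p \in SigmaG n G -> p' \in SigmaG n G ->
  rho G X (p * p') = rho G X p * rho G X p'.
Proof.
move=> pK p'K; apply/permP => y; rewrite permM.
have [/memO [q qK ->]|yO] := boolP (y \in orbitX (SigmaG n G) X); last first.
  by rewrite !rho_out ?groupM.
rewrite !rhoE2 ?groupM //.
  have -> : q (p^-1 X) = (p^-1 * q) X by rewrite permM.
  by rewrite rhoE2 ?groupM ?groupV // invMg !permM.
Qed.

Lemma rho1 : rho G X 1 = 1.
Proof.
apply/permP => y; rewrite perm1.
have [/memO [q qK ->]|yO] := boolP (y \in orbitX (SigmaG n G) X); last first.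
  by rewrite !rho_out ?group1.
by rewrite rhoE2 ?group1 // invg1 perm1.
Qed.

Lemma rho_inj p p' : p \in SigmaG n G -> p' \in SigmaG n G -> rho G X p = rho G X p' -> p = p'.
Proof.
move=> pK p'K e; have := congr1 (fun r : {perm tup n} => r ((1 : {perm tup n}) X)) e.
rewrite /= !rhoE2 ?group1 // !perm1 => /free_eq e2.
by apply: invg_inj; apply: e2; rewrite groupV.
Qed.

End Concrete.

Theorem theorem3p2 (n : nat) (X : tup n) (G : {group {perm 'Z_12}}) :
  injective X ->
  G \subset Aff ->
  (forall f, f \in G -> f != 1 ->
     [set f x | x in [set X i | i : 'I_n]] != [set X i | i : 'I_n]) ->
  (* rho(p) is a well-defined bijection for every p in Sigma_n G *)
  (forall p, p \in SigmaG n G -> injective (rho_fun G X p)) /\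
  (* (i) *)
  dual_group (orbitX (SigmaS n) X)
    (restr_perm (orbitX (SigmaS n) X) @: SigmaS n)
    (restr_perm (orbitX (SigmaS n) X) @: (rho G X @: SigmaS n)) /\
  dual_group (orbitX (Gt n G) X)
    (restr_perm (orbitX (Gt n G) X) @: Gt n G)
    (restr_perm (orbitX (Gt n G) X) @: (rho G X @: Gt n G)) /\
  (* (ii) *)
  (forall nu h, nu \in SigmaS n -> h \in Gt n G ->
     rho G X nu * rho G X h = rho G X h * rho G X nu) /\
  (* (iii) *)
  int_dprod (rho G X @: SigmaG n G) (rho G X @: SigmaS n) (rho G X @: Gt n G) /\
  (* (iv) *)
  (forall (s : 'S_n) (h : {perm 'Z_12}) (Y : tup n),
     h \in G -> Y \in [set sigma_act s (aff_act n g X) | g in G] ->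
     rho G X (aff_act n h) Y =
       sigma_act s (rho G X (aff_act n h) ((sigma_act s)^-1 Y))).
Proof.
move=> Xinj _ HG.
have SS : forall s, s \in SigmaS n -> s \in SigmaG n G.
  move=> s sS; rewrite SigmaG_eq -(mulg1 s).
  exact: (mem_mulg sS (group1 (Gtg n G))).
have GS : forall h, h \in Gt n G -> h \in SigmaG n G.
  move=> h hG; rewrite SigmaG_eq -(mul1g h).
  exact: (mem_mulg (group1 (SigmaSg n)) hG).
have ii : forall nu h, nu \in SigmaS n -> h \in Gt n G ->
     rho G X nu * rho G X h = rho G X h * rho G X nu.
  move=> nu h nuS hG.
  rewrite -(rho_mul Xinj HG (SS _ nuS) (GS _ hG)) -(rho_mul Xinj HG (GS _ hG) (SS _ nuS)).
  case/imsetP: nuS => s _ ->; case/imsetP: hG => f _ ->.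
  by rewrite comm_sa.
split; first by move=> p pK; exact: (rho_fun_inj Xinj HG pK).
split.
  apply: (@ab_dual _ (SigmaSg n) X (rho G X)).
    by move=> k kK; apply: (free_SG Xinj HG) => //; apply: SS.
  by move=> k q kK qK; rewrite (rhoE2 Xinj HG) // SS.
split.
  apply: (@ab_dual _ (Gtg n G) X (rho G X)).
    by move=> k kK; apply: (free_SG Xinj HG) => //; apply: GS.
  by move=> k q kK qK; rewrite (rhoE2 Xinj HG) // GS.
split; first exact: ii.
split.
  split.
  - by move=> k l /imsetP [nu nuS ->] /imsetP [h hG ->]; apply: ii.
  - apply/setP => x; rewrite !inE; apply/andP/eqP => [[/imsetP [nu nuS ->] /imsetP [h hG eh]]|->].
      have enh := rho_inj Xinj HG (SS _ nuS) (GS _ hG) eh.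
      case/imsetP: nuS enh => s _ ->; case/imsetP: hG eh => f fG -> _ es.
      have := @free_core n X G Xinj HG s^-1 f fG.
      rewrite -es -permM -sigma_actM mulVg sigma_act1 perm1 => /(_ erefl) [_ s1].
      by rewrite -(invgK s) s1 invg1 sigma_act1 (rho1 Xinj HG).
    by split; apply/imsetP; exists 1; rewrite ?(rho1 Xinj HG) //.
  - move=> x; split.
      move=> /imsetP [q qK ->]; case/memSG: qK => s [f fG ->].
      have sS : sigma_act s \in SigmaS n by apply/imsetP; exists s.
      have fS : aff_act n f \in Gt n G by apply/imsetP; exists f.
      exists (rho G X (sigma_act s)), (rho G X (aff_act n f)); split.
      + exact: imset_f.
      + exact: imset_f.
      + by rewrite (rho_mul Xinj HG (SS _ sS) (GS _ fS)).
    move=> [k [l [/imsetP [nu nuS ->] /imsetP [h hG ->] ->]]].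
    rewrite -(rho_mul Xinj HG (SS _ nuS) (GS _ hG)); apply: imset_f.
    by rewrite groupM ?(SS _ nuS) ?(GS _ hG).
move=> s h Y hG /imsetP [g gG ->].
have sG : sigma_act s \in SigmaG n G by apply: SS; apply/imsetP; exists s.
have hG' : aff_act n h \in SigmaG n G by apply: GS; apply: imset_f.
have gG' : aff_act n g \in SigmaG n G by apply: GS; apply: imset_f.
have -> : sigma_act s (aff_act n g X) = (aff_act n g * sigma_act s) X by rewrite permM.
rewrite (rhoE2 Xinj HG) ?groupM // permM.
by rewrite [(aff_act n g * _) X]permM permK (rhoE2 Xinj HG).
Qed.
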